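(* Let $n>m\ge 1$. In the checker game on $n+m+1$ positions, each of the configurations $b^{n-m}O(wb)^m$ and $b^{n-m}(wb)^mO$ can be transformed, by a sequence of exactly $(n-m)(m+1)$ legal moves, into one of the configurations $(wb)^mOb^{n-m}$ or $O(wb)^mb^{n-m}$.
   Context: Positions $1,\dots,n+m+1$ in a row; a configuration is a word over $\{b,w,O\}$ with exactly one $O$, where $b$ denotes a black checker, $w$ a white checker and $O$ the vacancy; exponents denote repetition (e.g. $(wb)^m$ is $wb$ repeated $m$ times). A legal move is either a slide (a checker adjacent to the vacancy moves into it) or a jump (a checker at distance two from the vacancy jumps over the checker between them into the vacancy). *)

(* Defs.v *)
From Stdlib Require Import List Arith.
Import ListNotations.

Inductive cell : Type := b | w | O.

Definition config := list cell.

Definition is_checker (x : cell) : Prop := x <> O.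

Definition wb_pow (m : nat) : config := concat (repeat [w; b] m).
Definition b_pow (k : nat) : config := repeat b k.

Inductive move : config -> config -> Prop :=
| slide_right : forall s1 s2 x, is_checker x ->
    move (s1 ++ [x; O] ++ s2) (s1 ++ [O; x] ++ s2)
| slide_left : forall s1 s2 x, is_checker x ->
    move (s1 ++ [O; x] ++ s2) (s1 ++ [x; O] ++ s2)
| jump_right : forall s1 s2 x y, is_checker x -> is_checker y ->
    move (s1 ++ [x; y; O] ++ s2) (s1 ++ [O; y; x] ++ s2)
| jump_left : forall s1 s2 x y, is_checker x -> is_checker y ->
    move (s1 ++ [O; y; x] ++ s2) (s1 ++ [x; y; O] ++ s2).

Inductive moves_in : nat -> config -> config -> Prop :=
| moves_refl : forall c, moves_in 0 c c
| moves_step : forall k c c' c'', move c c' -> moves_in k c' c'' ->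
    moves_in (S k) c c''.

(* Main.v *)
Require Import Defs.
From Stdlib Require Import List Arith Lia.
Import ListNotations.

Definition bw_pow (m : nat) : config := concat (repeat [b; w] m).

Lemma concat_repeat_S (l : config) m :
  concat (repeat l (S m)) = concat (repeat l m) ++ l.
Proof.
  change (repeat l (S m)) with (l :: repeat l m).
  rewrite repeat_cons, concat_app. simpl. now rewrite app_nil_r.
Qed.

Lemma b_pow_S j : b_pow (S j) = b_pow j ++ [b].
Proof. unfold b_pow. change [b] with (repeat b 1). rewrite <- repeat_app. f_equal; lia. Qed.

Lemma b_wb m : b :: wb_pow m = bw_pow m ++ [b].
Proof.
  induction m. reflexivity.
  unfold wb_pow, bw_pow in *. simpl. rewrite IHm. reflexivity.
Qed.

Lemma moves_trans k1 k2 c1 c2 c3 :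
  moves_in k1 c1 c2 -> moves_in k2 c2 c3 -> moves_in (k1 + k2) c1 c3.
Proof.
  induction 1; intros; simpl; auto. econstructor; eauto.
Qed.

Lemma chk_b : is_checker b. Proof. discriminate. Qed.
Lemma chk_w : is_checker w. Proof. discriminate. Qed.

Lemma jumps1 m : forall s1 s2,
  moves_in m (s1 ++ O :: bw_pow m ++ s2) (s1 ++ wb_pow m ++ O :: s2).
Proof.
  induction m; intros s1 s2. constructor.
  econstructor.
  - unfold bw_pow. simpl.
    pose proof (jump_left s1 (concat (repeat [b; w] m) ++ s2) w b chk_w chk_b) as H.
    simpl in H. exact H.
  - specialize (IHm (s1 ++ [w; b]) s2).
    rewrite <- !app_assoc in IHm. exact IHm.
Qed.

Lemma jumps2 m : forall s1 s2,
  moves_in m (s1 ++ bw_pow m ++ O :: s2) (s1 ++ O :: wb_pow m ++ s2).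
Proof.
  induction m; intros s1 s2. constructor.
  econstructor.
  - unfold bw_pow. rewrite concat_repeat_S. rewrite <- app_assoc.
    rewrite app_assoc.
    pose proof (jump_right (s1 ++ concat (repeat [b; w] m)) s2 b w chk_b chk_w) as H.
    simpl in H. exact H.
  - unfold wb_pow. rewrite concat_repeat_S. rewrite <- (app_assoc (concat (repeat [w; b] m))), <- app_assoc.
    specialize (IHm s1 (w :: b :: s2)). exact IHm.
Qed.

Definition cA m j r := b_pow j ++ [O] ++ wb_pow m ++ b_pow r.
Definition cB m j r := b_pow j ++ wb_pow m ++ [O] ++ b_pow r.

Lemma stepA m j r : moves_in (m + 1) (cA m (S j) r) (cB m j (S r)).
Proof.
  unfold cA, cB. rewrite Nat.add_comm. econstructor.
  - rewrite b_pow_S. rewrite <- app_assoc. simpl.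
    exact (slide_right (b_pow j) (wb_pow m ++ b_pow r) b chk_b).
  - simpl. change (b :: wb_pow m ++ b_pow r) with ((b :: wb_pow m) ++ b_pow r).
    rewrite b_wb. rewrite <- app_assoc. simpl.
    exact (jumps1 m (b_pow j) (b :: b_pow r)).
Qed.

Lemma stepB m j r : moves_in (m + 1) (cB m (S j) r) (cA m j (S r)).
Proof.
  unfold cA, cB. rewrite Nat.add_comm. econstructor.
  - rewrite b_pow_S. rewrite <- app_assoc. simpl.
    change (b :: wb_pow m ++ O :: b_pow r) with ((b :: wb_pow m) ++ O :: b_pow r).
    rewrite b_wb. rewrite <- app_assoc. rewrite app_assoc. simpl.
    exact (slide_right (b_pow j ++ bw_pow m) (b_pow r) b chk_b).
  - rewrite <- app_assoc. simpl.
    exact (jumps2 m (b_pow j) (b :: b_pow r)).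
Qed.

Lemma main m j : forall r c, c = cA m j r \/ c = cB m j r ->
  exists c', (c' = cB m 0 (r + j) \/ c' = cA m 0 (r + j)) /\ moves_in (j * (m + 1)) c c'.
Proof.
  induction j; intros r c Hc.
  - exists c. rewrite Nat.add_0_r. split. destruct Hc; auto. constructor.
  - destruct Hc as [-> | ->].
    + destruct (IHj (S r) (cB m j (S r)) (or_intror eq_refl)) as [c' [H1 H2]].
      exists c'. split. now replace (r + S j) with (S r + j) by lia.
      replace (S j * (m + 1)) with ((m + 1) + j * (m + 1)) by lia.
      eapply moves_trans. apply stepA. exact H2.
    + destruct (IHj (S r) (cA m j (S r)) (or_introl eq_refl)) as [c' [H1 H2]].
      exists c'. split. now replace (r + S j) with (S r + j) by lia.
      replace (S j * (m + 1)) with ((m + 1) + j * (m + 1)) by lia.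
      eapply moves_trans. apply stepB. exact H2.
Qed.

Theorem lemma4 (n m : nat) (hm : 1 <= m) (hmn : m < n) :
  forall c : config,
    c = b_pow (n - m) ++ [O] ++ wb_pow m \/ c = b_pow (n - m) ++ wb_pow m ++ [O] ->
    exists c' : config,
      (c' = wb_pow m ++ [O] ++ b_pow (n - m) \/ c' = [O] ++ wb_pow m ++ b_pow (n - m)) /\
      moves_in ((n - m) * (m + 1)) c c'.
Proof.
  intros c Hc.
  destruct (main m (n - m) 0 c) as [c' [H1 H2]].
  - unfold cA, cB. simpl. rewrite !app_nil_r. exact Hc.
  - exists c'. split; [|exact H2]. unfold cA, cB in H1. simpl in H1. exact H1.
Qed.
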